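(* Let $X\in\mathbb{R}^{m\times n}$, $\lambda>0$, and let $f:\mathbb{R}^{m\times n}\to\mathbb{R}$ be an arbitrary function. Consider the original R-PCA problem $$\min_{A,E\in\mathbb{R}^{m\times n}} \operatorname{rank}(A)+\lambda f(E)\quad\text{s.t.}\quad X=A+E, \tag{P}$$ and the relaxed R-LRR problem $$\min_{Z\in\mathbb{R}^{n\times n},\,E\in\mathbb{R}^{m\times n}} \|Z\|_*+\lambda f(E)\quad\text{s.t.}\quad X-E=(X-E)Z. \tag{R}$$ (i) If $(A^*,E^* )$ is any minimizer of (P), then $\big((A^* )^\dagger A^*,\,E^*\big)$ is an optimal solution of (R). (ii) Conversely, if $(Z^*,E^* )$ is a minimizer of (R), then $(X-E^*,E^* )$ is an optimal solution of (P).
   Context: $M^\dagger$ denotes the Moore–Penrose pseudo-inverse of $M$, and $\|\cdot\|_*$ denotes the nuclear norm (sum of singular values). *)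

(* Defs.v *)
(* Real matrices are modelled over an arbitrary real closed
   field R (rcfType); the paper's case is R = the real numbers. *)
From HB Require Import structures.
From mathcomp Require Import all_boot all_order all_algebra.
From Stdlib Require Import ClassicalEpsilon.
Set Implicit Arguments. Unset Strict Implicit. Unset Printing Implicit Defensive.
Import Order.TTheory GRing.Theory Num.Theory.
Local Open Scope ring_scope.

Section Defs.
Variable R : rcfType.

Definition orthomx (k : nat) (U : 'M[R]_k) : Prop := U *m U^T = 1%:M.

Definition is_svd (m n : nat) (A : 'M[R]_(m, n))
  (U : 'M[R]_m) (S : 'M[R]_(m, n)) (V : 'M[R]_n) : Prop :=
  orthomx U /\ orthomx V /\
  (forall (i : 'I_m) (j : 'I_n), nat_of_ord i <> nat_of_ord j -> S i j = 0) /\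
  (forall (i : 'I_m) (j : 'I_n), 0 <= S i j) /\
  A = U *m S *m V^T.

Definition is_nucnorm (m n : nat) (A : 'M[R]_(m, n)) (s : R) : Prop :=
  exists U S V, is_svd A U S V /\ s = \sum_(i < m) \sum_(j < n) S i j.

Definition nucnorm (m n : nat) (A : 'M[R]_(m, n)) : R :=
  epsilon (inhabits 0) (fun s => is_nucnorm A s).

(* Moore-Penrose conditions (real case: transpose = conjugate transpose). *)
Definition is_pinv (m n : nat) (A : 'M[R]_(m, n)) (B : 'M[R]_(n, m)) : Prop :=
  A *m B *m A = A /\ B *m A *m B = B /\
  (A *m B)^T = A *m B /\ (B *m A)^T = B *m A.

Definition pinv (m n : nat) (A : 'M[R]_(m, n)) : 'M[R]_(n, m) :=
  epsilon (inhabits 0) (fun B => is_pinv A B).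

Definition rpca_opt (m n : nat) (X : 'M[R]_(m, n)) (lam : R)
  (f : 'M[R]_(m, n) -> R) (A E : 'M[R]_(m, n)) : Prop :=
  X = A + E /\
  forall A' E' : 'M[R]_(m, n), X = A' + E' ->
    (\rank A)%:R + lam * f E <= (\rank A')%:R + lam * f E'.

Definition rlrr_opt (m n : nat) (X : 'M[R]_(m, n)) (lam : R)
  (f : 'M[R]_(m, n) -> R) (Z : 'M[R]_n) (E : 'M[R]_(m, n)) : Prop :=
  X - E = (X - E) *m Z /\
  forall (Z' : 'M[R]_n) (E' : 'M[R]_(m, n)), X - E' = (X - E') *m Z' ->
    nucnorm Z + lam * f E <= nucnorm Z' + lam * f E'.

End Defs.

(* Main.v *)
Require Import Defs.
From HB Require Import structures.
From mathcomp Require Import all_boot all_order all_algebra.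
From Stdlib Require Import ClassicalEpsilon.
From mathcomp Require Import complex.
From mathcomp Require Import ring lra.
Set Implicit Arguments. Unset Strict Implicit. Unset Printing Implicit Defensive.
Import Order.TTheory GRing.Theory Num.Theory.
Local Open Scope ring_scope.

Section Basic.
Variable R : rcfType.

Lemma zm_swap (V : zmodType) (a b c d : V) : a - b - (c - d) = a - c - (b - d).
Proof. by rewrite !opprD !opprK !addrA (addrAC a (-b)). Qed.

Lemma mxsubE k l (A B : 'M[R]_(k, l)) i j : (A - B) i j = A i j - B i j.
Proof. by rewrite !mxE. Qed.

Lemma gram_diag_ge0 k n (N : 'M[R]_(k, n)) i : 0 <= (N *m N^T) i i.
Proof. rewrite !mxE; apply: sumr_ge0 => j _; rewrite mxE; by rewrite -expr2 sqr_ge0. Qed.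

Lemma gram_eq0 k n (N : 'M[R]_(k, n)) : N *m N^T = 0 -> N = 0.
Proof.
move=> H; apply/matrixP => i j; rewrite mxE.
have := congr1 (fun M : 'M[R]_k => M i i) H; rewrite !mxE => Hs.
have Hp : forall j', true -> 0 <= N i j' * N^T j' i.
  by move=> j' _; rewrite mxE -expr2 sqr_ge0.
have := psumr_eq0P Hp Hs (i:=j) isT; rewrite mxE => /eqP; rewrite mulf_eq0 orbb.
by move/eqP.
Qed.


Lemma gram_unit r n (M : 'M[R]_(r, n)) : row_free M -> M *m M^T \in unitmx.
Proof.
move=> fM; rewrite -row_free_unit -kermx_eq0.
set K := kermx _.
have HK : K *m (M *m M^T) = 0 by rewrite mulmx_ker.
have : (K *m M) *m (K *m M)^T = 0.
  by rewrite trmx_mul mulmxA -(mulmxA K) HK mul0mx.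
move/gram_eq0/eqP; by rewrite mulmx_free_eq0.
Qed.

Lemma pinv_fact m n r (F : 'M[R]_(m, r)) (G : 'M[R]_(r, n)) F' G' :
  F' *m F = 1%:M -> G *m G' = 1%:M -> (F *m F')^T = F *m F' ->
  (G' *m G)^T = G' *m G -> is_pinv (F *m G) (G' *m F').
Proof.
move=> HF HG S1 S2.
have E1 : F *m G *m (G' *m F') = F *m F'.
  by rewrite -!mulmxA (mulmxA G G') HG mul1mx.
have E2 : G' *m F' *m (F *m G) = G' *m G.
  by rewrite -!mulmxA (mulmxA F' F) HF mul1mx.
rewrite /is_pinv E1 E2; split; [|split; [|split]] => //.
- by rewrite -mulmxA (mulmxA F' F) HF mul1mx.
- by rewrite -mulmxA (mulmxA G G') HG mul1mx.
Qed.

Lemma sym_proj k l (M : 'M[R]_(k, l)) :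
  (M *m invmx (M^T *m M) *m M^T)^T = M *m invmx (M^T *m M) *m M^T.
Proof. by rewrite !trmx_mul trmxK trmx_inv trmx_mul trmxK mulmxA. Qed.

Lemma pinv_exists m n (A : 'M[R]_(m, n)) : exists B, is_pinv A B.
Proof.
set F := col_base A; set G := row_base A.
have fG : row_free G by exact: row_base_free.
have fF : row_free F^T by rewrite /row_free mxrank_tr; exact: col_base_full.
have uG := gram_unit fG.
have uF := gram_unit fF.
rewrite trmxK in uF.
have := @pinv_fact _ _ _ F G (invmx (F^T *m F) *m F^T) (G^T *m invmx (G *m G^T)).
rewrite /F /G mulmx_base => H; eexists; apply: H.
- by rewrite -mulmxA mulVmx.
- by rewrite mulmxA mulmxV.
- by rewrite mulmxA sym_proj.
- by have := sym_proj G^T; rewrite !trmxK.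
Qed.

Lemma pinvP m n (A : 'M[R]_(m, n)) : is_pinv A (pinv A).
Proof.
rewrite /pinv; case: (pinv_exists A) => B HB.
exact: (epsilon_spec (inhabits 0) (fun B => is_pinv A B) (ex_intro _ B HB)).
Qed.


Lemma orth_tr n (U : 'M[R]_n) : Defs.orthomx U -> U^T *m U = 1%:M.
Proof. by move=> H; apply: mulmx1C. Qed.

Lemma psd_diag n (Q M : 'M[R]_n) i : Q^T = Q -> Q *m Q = Q ->
  0 <= (M^T *m Q *m M) i i.
Proof.
move=> St Id.
have -> : M^T *m Q *m M = (Q *m M)^T *m (Q *m M)^T^T.
  by rewrite trmxK trmx_mul St mulmxA -(mulmxA _ Q Q) Id.
exact: gram_diag_ge0.
Qed.

Lemma diag_le1 n (P X Y : 'M[R]_n) i : P^T = P -> P *m P = P ->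
  X^T *m X = 1%:M -> Y^T *m Y = 1%:M -> (X^T *m P *m Y) i i <= 1.
Proof.
move=> St Id HX HY.
have St' : (1%:M - P)^T = 1%:M - P by rewrite linearB /= trmx1 St.
have Id' : (1%:M - P) *m (1%:M - P) = 1%:M - P.
  by rewrite mulmxBl mulmxBr !mul1mx mulmxBr mulmx1 Id subrr subr0.
have h1 : forall Z : 'M[R]_n, Z^T *m Z = 1%:M -> (Z^T *m P *m Z) i i <= 1.
  move=> Z HZ.
  have E : Z^T *m Z - Z^T *m P *m Z = Z^T *m (1%:M - P) *m Z.
    rewrite mulmxBr mulmx1; apply/esym; apply: mulmxBl.
  have := psd_diag Z i St' Id'; rewrite -E HZ !mxE eqxx /=; lra.
have E3 : (X - Y)^T *m P *m (X - Y) = X^T *m P *m X - X^T *m P *m Y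
   - (Y^T *m P *m X - Y^T *m P *m Y).
  have tB : (X - Y)^T = X^T - Y^T by rewrite linearB.
  by rewrite mulmxBr tB !mulmxBl zm_swap.
have h3 := psd_diag (X - Y) i St Id.
have e : (Y^T *m P *m X) i i = (X^T *m P *m Y) i i.
  by rewrite -[Y^T *m P *m X]trmxK mxE !trmx_mul !trmxK St mulmxA.
have := h1 X HX; have := h1 Y HY.
move: h3 e; rewrite E3.
set a := (X^T *m P *m X) i i; set b := (X^T *m P *m Y) i i.
set c := (Y^T *m P *m X) i i; set d := (Y^T *m P *m Y) i i.
rewrite !mxsubE -/a -/b -/c -/d; lra.
Qed.


Definition offdiag0 n (S : 'M[R]_n) :=
  forall (i j : 'I_n), nat_of_ord i <> nat_of_ord j -> S i j = 0.

Lemma mul_diag_entry n (M S : 'M[R]_n) i : offdiag0 S ->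
  (M *m S) i i = M i i * S i i.
Proof.
move=> Sd; rewrite mxE (bigD1 i) //= big1 ?addr0 // => k /eqP ki.
by rewrite Sd ?mulr0 // => /val_inj.
Qed.

Lemma sum_diag n (S : 'M[R]_n) : offdiag0 S ->
  \sum_i \sum_j S i j = \sum_i S i i.
Proof.
move=> Sd; apply: eq_bigr => i _; rewrite (bigD1 i) //= big1 ?addr0 // => k /eqP ki.
by rewrite Sd // => /val_inj H; apply: ki; rewrite H.
Qed.

Lemma tr_le_svd n (P Z U S V : 'M[R]_n) : P^T = P -> P *m P = P ->
  P = P *m Z -> is_svd Z U S V -> \tr P <= \sum_i \sum_j S i j.
Proof.
move=> St Id E [oU [oV [Sd [S0 HZ]]]].
have UU := orth_tr oU; have VV := orth_tr oV.
have Htr : \tr P = \tr (V^T *m P *m U *m S).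
  by rewrite {1}E HZ mxtrace_mulC -(mulmxA (U *m S)) (mxtrace_mulC (U *m S)) !mulmxA.
rewrite Htr sum_diag // /mxtrace; apply: ler_sum => i _.
rewrite mul_diag_entry //.
have := diag_le1 i St Id VV UU; have := S0 i i; nra.
Qed.


Lemma sq_idem (s : R) : 0 <= s -> s * s * (s * s) = s * s -> s * s = s.
Proof.
move=> s0 H.
have : (s * s) * (s * s - 1) = 0 by rewrite mulrBr mulr1 H subrr.
move/eqP; rewrite mulf_eq0 => /orP [|].
  by rewrite mulf_eq0 orbb => /eqP ->; rewrite mulr0.
rewrite subr_eq0 => /eqP h; rewrite h; nra.
Qed.

Lemma svd_proj n (P U S V : 'M[R]_n) : P^T = P -> P *m P = P ->
  is_svd P U S V -> \sum_i \sum_j S i j = \tr P.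
Proof.
move=> St Id [oU [oV [Sd [S0 HZ]]]].
have UU := orth_tr oU; have VV := orth_tr oV.
set D := S^T *m S.
have HP : P = V *m D *m V^T.
  rewrite -{1}Id -{1}St {1 2}HZ !trmx_mul !trmxK /D.
  by rewrite !mulmxA -(mulmxA _ U^T U) UU mulmx1.
have HD : V^T *m P *m V = D.
  by rewrite HP !mulmxA VV mul1mx -mulmxA VV mulmx1.
have DD : D *m D = D.
  have oV' : V *m V^T = 1%:M := oV.
  by rewrite -HD !mulmxA -(mulmxA _ V V^T) oV' mulmx1 -(mulmxA _ P P) Id.
have Dii : forall i, D i i = S i i * S i i.
  move=> i; rewrite /D mxE (bigD1 i) //= big1 ?addr0 ?mxE // => k /eqP ki.
  by rewrite mxE Sd ?mul0r // => /val_inj H; apply: ki; rewrite H.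
have Dd : offdiag0 D.
  move=> i j ij; rewrite /D mxE big1 // => k _; rewrite mxE.
  case: (eqVneq k i) => [->|ki]; first by rewrite (Sd i j ij) mulr0.
  by rewrite Sd ?mul0r // => /val_inj; apply/eqP.
rewrite sum_diag //.
have -> : \tr P = \tr D by rewrite -HD mxtrace_mulC mulmxA (oV : V *m V^T = 1%:M) mul1mx.
rewrite /mxtrace; apply: eq_bigr => i _.
rewrite Dii; apply/esym/sq_idem => //.
by have := congr1 (fun M : 'M[R]_n => M i i) DD; rewrite /= mul_diag_entry // Dii.
Qed.


Lemma GF_one n r (F : 'M[R]_(n, r)) (G : 'M[R]_(r, n)) F' G' :
  F' *m F = 1%:M -> G *m G' = 1%:M -> F *m G *m (F *m G) = F *m G ->
  G *m F = 1%:M.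
Proof.
move=> HF HG Id.
have : F' *m (F *m G *m (F *m G)) *m G' = 1%:M.
  by rewrite Id mulmxA HF mul1mx HG.
by rewrite !mulmxA HF mul1mx -!mulmxA HG mulmx1.
Qed.

Lemma tr_idem n (P : 'M[R]_n) : P *m P = P -> \tr P = (\rank P)%:R.
Proof.
move=> Id.
have [F' HF] := row_fullP (col_base_full P).
have [G' HG] := row_freeP (row_base_free P).
have Id' := Id; rewrite -(mulmx_base P) in Id'.
have GF := GF_one HF HG Id'.
by rewrite -{1}(mulmx_base P) mxtrace_mulC GF mxtrace1.
Qed.


Lemma zm2 (V : zmodType) (o a : V) : o - a - (a - (a + a)) = o.
Proof. have -> : a - (a + a) = - a by rewrite opprD addrA subrr add0r.
by rewrite opprK subrK. Qed.

Lemma house n (x : 'rV[R]_(1 + n)) : x *m x^T = 1%:M ->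
  exists H : 'M[R]_(1 + n), H *m H^T = 1%:M /\ usubmx H = x.
Proof.
move=> Hx.
set i0 : 'I_(1 + n) := lshift n ord0.
have sx : \sum_j x 0 j * x 0 j = 1.
  by have := congr1 (fun M : 'M[R]_1 => M 0 0) Hx; rewrite !mxE /=;
     under eq_bigr do rewrite mxE.
set s : R := x 0 i0.
have sx' : \sum_(j | j != i0) x 0 j * x 0 j = 1 - s * s.
  by rewrite -sx [in RHS](bigD1 i0) //= addrC addrK.
set w : 'rV[R]_(1 + n) := \row_j (x 0 j - (j == i0)%:R).
set c : R := (w *m w^T) 0 0.
have cE : c = 2 - 2 * s.
  rewrite /c mxE (bigD1 i0) //= !mxE eqxx.
  rewrite (eq_bigr (fun j => x 0 j * x 0 j)); last first.
    by move=> j /negbTE ji; rewrite !mxE ji subr0.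
  rewrite sx' /=; change (x 0 i0) with s; rewrite mulr1n; ring.
have [c0|cn0] := eqVneq c 0.
  have s1 : s = 1 by move: c0; rewrite cE => /eqP; rewrite subr_eq0 => /eqP; lra.
  have xo : forall j, j != i0 -> x 0 j = 0.
    move=> j ji; have := sx'; rewrite s1 mulr1 subrr => Hs.
    have Hp : forall k, k != i0 -> 0 <= x 0 k * x 0 k.
      by move=> k _; rewrite -expr2 sqr_ge0.
    have := psumr_eq0P Hp Hs (i:=j) ji.
    by move/eqP; rewrite mulf_eq0 orbb => /eqP.
  exists 1%:M; split; first by rewrite trmx1 mulmx1.
  apply/matrixP => i j; rewrite (ord1 i) !mxE.
  case: (eqVneq j i0) => [->|ji]; first by rewrite -/s s1.
  by rewrite xo.
set W := w^T *m w.
set k := 2 / c.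
exists (1%:M - k *: W); split.
  have WT : W^T = W by rewrite /W trmx_mul trmxK.
  have WW : W *m W = c *: W.
    by rewrite /W mulmxA -(mulmxA w^T) [w *m w^T]mx11_scalar mul_mx_scalar
       -scalemxAl.
  have kk : k * (k * c) = k + k by rewrite /k; field.
  have HT : (1%:M - k *: W)^T = 1%:M - k *: W.
    apply/matrixP => a b; have := congr1 (fun M : 'M[R]_(1 + n) => M a b) WT.
    by rewrite !mxE eq_sym => ->.
  rewrite HT.
  rewrite mulmxBl mul1mx mulmxBr mulmx1 -scalemxAl -scalemxAr WW.
  by rewrite !scalerA -mulrA kk scalerDl zm2.
apply/matrixP => i j; rewrite (ord1 i) !mxE big_ord1 !mxE -/i0 -/s eqxx.
have sn1 : s - 1 != 0.
  by apply: contraNneq cn0 => h; apply/eqP; rewrite cE; lra.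
rewrite /k cE; case: (eqVneq i0 j) => [<-|ij].
  rewrite /= -/s mulr1n; field.
  by apply: contraNneq sn1 => h; apply/eqP; lra.
rewrite /= mulr1n subr0; field.
by apply: contraNneq sn1 => h; apply/eqP; lra.
Qed.

End Basic.

Section Eig.
Variable R : rcfType.
Local Notation C := (R[i]).
Local Open Scope complex_scope.
Local Notation Re := (@complex.Re R).
Local Notation Im := (@complex.Im R).

Lemma ReD (a b : C) : Re (a + b) = Re a + Re b.
Proof. by case: a => ? ?; case: b => ? ?; simpc. Qed.
Lemma ImD (a b : C) : Im (a + b) = Im a + Im b.
Proof. by case: a => ? ?; case: b => ? ?; simpc. Qed.
Lemma ReM (a b : C) : Re (a * b) = Re a * Re b - Im a * Im b.
Proof. by case: a => ? ?; case: b => ? ?; simpc. Qed.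
Lemma ImM (a b : C) : Im (a * b) = Re a * Im b + Im a * Re b.
Proof. by case: a => ? ?; case: b => ? ?; simpc. Qed.
Lemma Re0 : Re (0 : C) = 0. Proof. by []. Qed.
Lemma Im0 : Im (0 : C) = 0. Proof. by []. Qed.
Lemma ReR (r : R) : Re (r%:C) = r. Proof. by []. Qed.
Lemma ImR (r : R) : Im (r%:C) = 0. Proof. by []. Qed.

Lemma Re_sum I (r : seq I) (F : I -> C) : Re (\sum_(i <- r) F i) = \sum_(i <- r) Re (F i).
Proof. exact: (big_morph _ ReD Re0). Qed.
Lemma Im_sum I (r : seq I) (F : I -> C) : Im (\sum_(i <- r) F i) = \sum_(i <- r) Im (F i).
Proof. exact: (big_morph _ ImD Im0). Qed.


Lemma lin2E k l (M N : 'M[R]_(k, l)) (a b : R) i j :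
  (a *: M - b *: N) i j = a * M i j - b * N i j.
Proof. by rewrite !mxE. Qed.
Lemma lin2E' k l (M N : 'M[R]_(k, l)) (a b : R) i j :
  (a *: M + b *: N) i j = a * M i j + b * N i j.
Proof. by rewrite !mxE. Qed.

Lemma tr11 l (M : 'M[R]_(1, l)) (N : 'M[R]_(l, 1)) :
  (M *m N) 0 0 = (N^T *m M^T) 0 0 :> R.
Proof. by rewrite -trmx_mul [in RHS]mxE. Qed.

Lemma gram11 k (x : 'rV[R]_k) : 0 <= (x *m x^T) 0 0.
Proof. exact: gram_diag_ge0. Qed.

Lemma gram11_eq0 k (x : 'rV[R]_k) : (x *m x^T) 0 0 = 0 -> x = 0.
Proof. by move=> h; apply: gram_eq0; apply/matrixP => i j; rewrite (ord1 i) (ord1 j) h mxE. Qed.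

Lemma sym_eigen n (A : 'M[R]_n.+1) : A^T = A ->
  exists (v : 'rV[R]_n.+1) (a : R), v != 0 /\ v *m A = a *: v.
Proof.
move=> SA.
set AC := map_mx (real_complex R) A.
have : size (char_poly AC) != 1%N by rewrite size_char_poly.
case/closed_rootP => z rz.
have : eigenvalue AC z by rewrite eigenvalue_root_char.
case/eigenvalueP => w Hw wn0.
set x : 'rV[R]_n.+1 := map_mx Re w; set y : 'rV[R]_n.+1 := map_mx Im w.
set a := Re z; set b := Im z.
have Hx : x *m A = a *: x - b *: y.
  apply/rowP => j; have := congr1 (fun M : 'rV[C]_n.+1 => Re (M 0 j)) Hw.
  rewrite /= lin2E !mxE Re_sum ReM => <-; apply: eq_bigr => k _.
  by rewrite !mxE ReM ReR ImR mulr0 subr0.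
have Hy : y *m A = a *: y + b *: x.
  apply/rowP => j; have := congr1 (fun M : 'rV[C]_n.+1 => Im (M 0 j)) Hw.
  rewrite /= lin2E' !mxE Im_sum ImM => <-; apply: eq_bigr => k _.
  by rewrite !mxE ImM ReR ImR mulr0 add0r.
have pq : (x *m A *m y^T) 0 0 = (y *m A *m x^T) 0 0.
  by rewrite tr11 trmx_mul trmxK SA mulmxA.
have xy : (x *m y^T) 0 0 = (y *m x^T) 0 0 by rewrite tr11 trmxK.
move: pq; rewrite Hx Hy mulmxBl mulmxDl -!scalemxAl lin2E lin2E' xy => pq.
have gx := gram11 x; have gy := gram11 y.
have w0 : forall j, w 0 j = (x 0 j) +i* (y 0 j).
  by move=> j; rewrite !mxE; case: (w 0 j).
have xy0 : x != 0 \/ y != 0.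
  case: (eqVneq x 0) => [x0|]; last by left.
  case: (eqVneq y 0) => [y0|]; last by right.
  move: wn0; have -> : w = 0 by apply/rowP => j; rewrite w0 x0 y0 !mxE. by rewrite eqxx.
have b0 : b = 0.
  case: xy0 => [xn|yn].
    have : 0 < (x *m x^T) 0 0.
      rewrite lt_def gx andbT; by apply: contra xn => /eqP /gram11_eq0 ->.
    nra.
  have : 0 < (y *m y^T) 0 0.
    rewrite lt_def gy andbT; by apply: contra yn => /eqP /gram11_eq0 ->.
  nra.
move: Hx Hy; rewrite b0 !scale0r subr0 addr0 => Hx Hy.
case: xy0 => [xn|yn]; first by exists x, a.
by exists y, a.
Qed.

Lemma normalize k (v : 'rV[R]_k) : v != 0 ->
  exists2 u : 'rV[R]_k, u *m u^T = 1%:M & exists2 c : R, 0 < c & v = c *: u.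
Proof.
move=> vn0; set q := (v *m v^T) 0 0.
have q0 : 0 < q.
  by rewrite lt_def gram11 andbT; apply: contra vn0 => /eqP /gram11_eq0 ->.
set c := Num.sqrt q.
have c0 : 0 < c by rewrite sqrtr_gt0.
exists (c^-1 *: v); last first.
  by exists c => //; rewrite scalerA mulfV ?scale1r // gt_eqF.
rewrite linearZ /= -scalemxAl -scalemxAr scalerA [v *m v^T]mx11_scalar -/q.
rewrite -scalemx1 scalerA.
have -> : c^-1 * c^-1 * q = 1.
  by rewrite -invfM -expr2 sqr_sqrtr ?mulVf ?gt_eqF // ltW.
by rewrite scale1r.
Qed.

Lemma scale_inj k l (c : R) (M N : 'M[R]_(k, l)) : c != 0 -> c *: M = c *: N -> M = N.
Proof.
move=> cn0 /(congr1 (fun P => c^-1 *: P)); by rewrite !scalerA mulVf // !scale1r.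
Qed.

Lemma sing_pair n (Z : 'M[R]_n.+1) : exists (x u : 'rV[R]_n.+1) (s : R),
  [/\ x *m x^T = 1%:M, u *m u^T = 1%:M, 0 <= s, u *m Z = s *: x
     & x *m Z^T = s *: u].
Proof.
have SG : (Z^T *m Z)^T = Z^T *m Z by rewrite trmx_mul trmxK.
have [v [d [vn0 Hv]]] := sym_eigen SG.
have [x Hx [c c0 vE]] := normalize vn0.
have Hx' : x *m (Z^T *m Z) = d *: x.
  apply: (@scale_inj _ _ c); first by rewrite gt_eqF.
  by rewrite scalemxAl -vE Hv vE !scalerA mulrC.
set y := x *m Z^T.
case: (eqVneq y 0) => [y0|yn0].
  have Zx : Z *m x^T = 0 by rewrite -[Z]trmxK -trmx_mul -/y y0 trmx0.
  have Zn : Z \notin unitmx.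
    apply/negP => Zu.
    have : x^T = 0 by rewrite -(mulKmx Zu x^T) Zx mulmx0.
    move/(congr1 trmx); rewrite trmxK trmx0 => x0.
    have := congr1 (fun M : 'M[R]_1 => M 0 0) Hx; rewrite x0 mul0mx !mxE /=.
    by move/eqP; rewrite eq_sym oner_eq0.
  have Kn : kermx Z != 0 by rewrite kermx_eq0 row_free_unit.
  have : [exists i, row i (kermx Z) != 0].
    apply: contraNT Kn => /existsPn H.
    by apply/eqP/row_matrixP => i; rewrite row0; apply/eqP/negbNE/H.
  case/existsP => i Ki.
  have [u Hu [c' c'0 uE]] := normalize Ki.
  exists x, u, 0; split => //; last by rewrite scale0r.
  rewrite scale0r; apply: (@scale_inj _ _ c'); first by rewrite gt_eqF.
  by rewrite scalemxAl -uE -row_mul mulmx_ker row0 scaler0.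
have [u Hu [sg sg0 yE]] := normalize yn0.
exists x, u, sg; split => //; first exact: ltW.
have yZ : y *m Z = d *: x by rewrite /y -mulmxA Hx'.
have yy : y *m y^T = d%:M.
  by rewrite {2}/y trmx_mul trmxK /y mulmxA -(mulmxA x) Hx' -scalemxAl Hx scalemx1.
have yy' : y *m y^T = (sg * sg)%:M.
  by rewrite yE linearZ /= -scalemxAl -scalemxAr Hu scalerA scalemx1.
have dE : d = sg * sg.
  by have := congr1 (fun M : 'M[R]_1 => M 0 0) yy'; rewrite yy !mxE.
apply: (@scale_inj _ _ sg); first by rewrite gt_eqF.
by rewrite scalemxAl -yE yZ dE scalerA.
Qed.

Lemma complete_row n (x : 'rV[R]_(1 + n)) : x *m x^T = 1%:M ->
  exists H' : 'M[R]_(n, 1 + n),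
  [/\ x *m H'^T = 0, H' *m x^T = 0 & H' *m H'^T = 1%:M].
Proof.
move=> Hx; have [H [HH Hu]] := house Hx.
exists (dsubmx H).
move: HH; rewrite -[H in H *m _](vsubmxK H) -[H in _ *m H^T](vsubmxK H) Hu.
rewrite tr_col_mx mul_col_row (@scalar_mx_block _ 1 n 1).
by case/eq_block_mx => _ -> -> ->.
Qed.

Lemma blk_orth n (U' : 'M[R]_n) : U' *m U'^T = 1%:M ->
  block_mx (1%:M : 'M[R]_1) 0 0 U' *m (block_mx (1%:M : 'M[R]_1) 0 0 U')^T = 1%:M.
Proof.
move=> HU; rewrite tr_block_mx mulmx_block !trmx0 trmx1 HU.
rewrite !mulmx0 !mul0mx !mulmx1 !addr0 !add0r.
by rewrite -(@scalar_mx_block _ 1 n 1).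
Qed.

Lemma blk_diag n (s : R) (S' : 'M[R]_n) : 0 <= s -> offdiag0 S' ->
  (forall i j, 0 <= S' i j) ->
  offdiag0 (block_mx (s%:M : 'M[R]_1) 0 0 S') /\
  (forall i j, 0 <= block_mx (s%:M : 'M[R]_1) 0 0 S' i j).
Proof.
move=> s0 Sd S0; split.
  move=> i j; case: (splitP i) => [i' ei|i' ei]; case: (splitP j) => [j' ej|j' ej].
  - have -> : i = lshift n i' by apply: val_inj.
    have -> : j = lshift n j' by apply: val_inj.
    by rewrite block_mxEul (ord1 i') (ord1 j') => /(_ erefl).
  - have -> : i = lshift n i' by apply: val_inj.
    have -> : j = rshift 1 j' by apply: val_inj.
    by rewrite block_mxEur mxE.
  - have -> : i = rshift 1 i' by apply: val_inj.
    have -> : j = lshift n j' by apply: val_inj.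
    by rewrite block_mxEdl mxE.
  - have -> : i = rshift 1 i' by apply: val_inj.
    have -> : j = rshift 1 j' by apply: val_inj.
    rewrite block_mxEdr => h; apply: Sd => h'; apply: h; by rewrite /= h'.
move=> i j; case: (splitP i) => [i' ei|i' ei]; case: (splitP j) => [j' ej|j' ej].
- have -> : i = lshift n i' by apply: val_inj.
  have -> : j = lshift n j' by apply: val_inj.
  by rewrite block_mxEul (ord1 i') (ord1 j') mxE.
- have -> : i = lshift n i' by apply: val_inj.
  have -> : j = rshift 1 j' by apply: val_inj.
  by rewrite block_mxEur mxE.
- have -> : i = rshift 1 i' by apply: val_inj.
  have -> : j = lshift n j' by apply: val_inj.
  by rewrite block_mxEdl mxE.
- have -> : i = rshift 1 i' by apply: val_inj.
  have -> : j = rshift 1 j' by apply: val_inj.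
  by rewrite block_mxEdr.
Qed.

Lemma svd_exists' n (Z : 'M[R]_n) : exists U S V, is_svd Z U S V.
Proof.
elim: n Z => [|n IH] Z.
  exists 1%:M, 0, 1%:M; split; [|split; [|split; [|split]]].
  - by rewrite /Defs.orthomx trmx1 mulmx1.
  - by rewrite /Defs.orthomx trmx1 mulmx1.
  - by move=> [].
  - by move=> [].
  - by apply/matrixP => -[].
have [x [u [s [Hx Hu s0 uZ xZ]]]] := sing_pair Z.
have [H1' [x1 x2 O1]] := complete_row Hx.
have [H2' [u1 u2 O2]] := complete_row Hu.
set Z' := H2' *m Z *m H1'^T.
have [U' [S' [V' [oU [oV [Sd [S0 HZ']]]]]]] := IH Z'.
set H1 : 'M[R]_(1 + n) := col_mx x H1'.
set H2 : 'M[R]_(1 + n) := col_mx u H2'.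
have OH1 : H1 *m H1^T = 1%:M.
  by rewrite /H1 tr_col_mx mul_col_row Hx x1 x2 O1 -(@scalar_mx_block _ 1 n 1).
have OH2 : H2 *m H2^T = 1%:M.
  by rewrite /H2 tr_col_mx mul_col_row Hu u1 u2 O2 -(@scalar_mx_block _ 1 n 1).
have HM : H2 *m Z *m H1^T = block_mx (s%:M : 'M[R]_1) 0 0 Z'.
  rewrite /H2 /H1 mul_col_mx tr_col_mx mul_col_row uZ -!scalemxAl Hx scalemx1 x1.
  rewrite scaler0; congr block_mx.
  have Zx : Z *m x^T = s *: u^T by rewrite -[Z]trmxK -trmx_mul xZ linearZ.
  by rewrite -mulmxA Zx -scalemxAr u2 scaler0.
set BU := block_mx (1%:M : 'M[R]_1) 0 0 U'.
set BV := block_mx (1%:M : 'M[R]_1) 0 0 V'.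
set S := block_mx (s%:M : 'M[R]_1) 0 0 S'.
have [Sd' S0'] := blk_diag s0 Sd S0.
exists (H2^T *m BU), S, (H1^T *m BV); split; [|split; [|split; [|split]]] => //.
- rewrite /Defs.orthomx trmx_mul mulmxA -(mulmxA _ BU) blk_orth // mulmx1.
  by rewrite trmxK; exact: mulmx1C.
- rewrite /Defs.orthomx trmx_mul mulmxA -(mulmxA _ BV) blk_orth // mulmx1.
  by rewrite trmxK; exact: mulmx1C.
- have BM : BU *m S *m BV^T = block_mx (s%:M : 'M[R]_1) 0 0 Z'.
    rewrite /BU /S /BV tr_block_mx !trmx0 trmx1 !mulmx_block.
    rewrite !mulmx0 !mul0mx !mulmx1 !mul1mx !addr0 !add0r HZ'.
    by rewrite mul0mx.
  rewrite trmx_mul trmxK !mulmxA -(mulmxA _ BU S) -(mulmxA _ (BU *m S) BV^T) BM -HM.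
  by rewrite !mulmxA (mulmx1C OH2) mul1mx -mulmxA (mulmx1C OH1) mulmx1.
Qed.

End Eig.

Section Main.
Variable R : rcfType.

Lemma svd_exists n (Z : 'M[R]_n) : exists U S V, is_svd Z U S V.
Proof. exact: svd_exists'. Qed.

Lemma nuc_spec n (Z : 'M[R]_n) :
  exists U S V, is_svd Z U S V /\ nucnorm Z = \sum_i \sum_j S i j.
Proof.
have [U [S [V H]]] := svd_exists Z.
have ex : exists s, is_nucnorm Z s by exists (\sum_i \sum_j S i j), U, S, V.
have := epsilon_spec (inhabits 0) _ ex.
rewrite -/(nucnorm Z) => -[U' [S' [V' [H' E]]]].
by exists U', S', V'.
Qed.

Lemma proj_facts m n (A : 'M[R]_(m, n)) :
  let P := pinv A *m A in
  [/\ P^T = P, P *m P = P, A *m P = A & \rank P = \rank A].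
Proof.
have [h1 [h2 [h3 h4]]] := pinvP A.
split => //.
- by rewrite mulmxA h2.
- by rewrite mulmxA.
- apply/eqP; rewrite eqn_leq mxrankM_maxr /=.
  by rewrite -{1}h1 -mulmxA mxrankM_maxr.
Qed.

Lemma nuc_lower m n (A : 'M[R]_(m, n)) (Z : 'M[R]_n) :
  A = A *m Z -> (\rank A)%:R <= nucnorm Z.
Proof.
move=> HA; have [St Id AP rk] := proj_facts A.
have HP : pinv A *m A = pinv A *m A *m Z by rewrite -mulmxA -HA.
have [U [S [V [H E]]]] := nuc_spec Z.
by rewrite E -rk -tr_idem //; apply: tr_le_svd H.
Qed.

Lemma nuc_proj m n (A : 'M[R]_(m, n)) : nucnorm (pinv A *m A) = (\rank A)%:R.
Proof.
have [St Id AP rk] := proj_facts A.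
have [U [S [V [H E]]]] := nuc_spec (pinv A *m A).
by rewrite E (svd_proj St Id H) tr_idem // rk.
Qed.

End Main.

Theorem theorem2 (R : rcfType) (m n : nat) (X : 'M[R]_(m, n)) (lam : R)
  (f : 'M[R]_(m, n) -> R) (hlam : 0 < lam) :
  (forall A E : 'M[R]_(m, n),
     rpca_opt X lam f A E -> rlrr_opt X lam f (pinv A *m A) E) /\
  (forall (Z : 'M[R]_n) (E : 'M[R]_(m, n)),
     rlrr_opt X lam f Z E -> rpca_opt X lam f (X - E) E).
Proof.
split.
- move=> A E [HX Hopt]; split.
    have [_ _ AP _] := proj_facts A.
    by rewrite HX addrK AP.
  move=> Z' E' HZ'; rewrite nuc_proj.
  have := Hopt (X - E') E' (esym (subrK E' X)).
  have := nuc_lower HZ'; lra.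
- move=> Z E [HZ Hopt]; split; first by rewrite subrK.
  move=> A' E' HX.
  have [_ _ AP _] := proj_facts A'.
  have H1 : X - E' = (X - E') *m (pinv A' *m A') by rewrite HX addrK AP.
  have := Hopt _ _ H1; rewrite nuc_proj.
  have := nuc_lower HZ; lra.
Qed.
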